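(* Let $f$ be the signature type of an abelian monodromy datum $(G,r,\underline{a})$. If there exists $\tau\in\mathcal{T}_G$ with $f(\tau^* )=0$ and $g(\tau)\ge 2$, then there exists $\tau'\in\mathcal{T}_G$ with $f(\tau'^* )=1$ and $g(\tau')\ge 2$.
   Context: A monodromy datum $(G,r,\underline{a})$: $G$ finite abelian, $r\ge 3$, $\underline{a}=(a(1),\dots,a(r))\in G^r$ with each $a(i)\ne 0$, the $a(i)$ generating $G$, and $\sum a(i)=0$. $\mathcal{T}_G=\mathrm{Hom}(G,\mathbb{C}^\times)$, $\tau^*(g)=\tau(g^{-1})$. The signature type is $f(\tau)=\dim H^0(C,\Omega^1_C)_\tau$ for a complex smooth $G$-cover $C\to\mathbb{P}^1$ with this monodromy datum, and $g(\tau)=f(\tau)+f(\tau^* )$. For $G=\mathbb{Z}/m\mathbb{Z}$ and $\tau(1)=e^{2\pi i A/m}$ one has $f(\tau^* )=-1+\sum_{k=1}^r\langle A a(k)/m\rangle$, $\langle x\rangle$ the fractional part; for general $G$ and $H=\ker\tau$, $f(\tau)$ agrees with the signature of $\tau$ viewed as a character of the cyclic quotient $G/H$ for the quotient cover $C/H\to\mathbb{P}^1$. *)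

(* Defs.v *)
From HB Require Import structures.
From mathcomp Require Import all_boot all_order all_algebra all_fingroup all_solvable all_field all_character.
Set Implicit Arguments. Unset Strict Implicit. Unset Printing Implicit Defensive.
Import Order.TTheory GRing.Theory Num.Theory.
Local Open Scope ring_scope.

(* zeta N = exp(2 pi i / N) in algC: N.-root (-1) is the N-th root of -1 with
   minimal nonnegative argument, i.e. exp(pi i / N). *)
Definition zeta (N : nat) : algC := (N.-root (-1)) ^+ 2.

(* For an N-th root of unity z = exp(2 pi i k / N) with 0 <= k < N,
   angle N z = k / N, the fractional part <arg(z)/(2 pi)>. *)
Definition angle (N : nat) (z : algC) : rat :=
  (find (fun k => z == zeta N ^+ k) (iota 0 N))%:R / N%:R.

(* Signature type of the monodromy datum (G, r, a), via the Chevalley-Weil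
   formula: for a nontrivial character sigma,
     f(sigma) = -1 + sum_k < arg(sigma^*(a(k))) / 2pi >,
   i.e. f(tau^* ) = -1 + sum_k <A a(k)/m> when tau(a(k)) = exp(2 pi i A a(k)/m);
   for the trivial character f = 0 (genus of P^1). *)
Definition sigf (gT : finGroupType) (G : {group gT}) (r : nat)
  (a : 'I_r -> gT) (sigma : 'CF(G)) : rat :=
  if sigma == 1 then 0
  else -1 + \sum_(i < r) angle #|G| ((sigma^*)%CF (a i)).

Definition gsig (gT : finGroupType) (G : {group gT}) (r : nat)
  (a : 'I_r -> gT) (tau : 'CF(G)) : rat :=
  sigf a tau + sigf a (tau^*)%CF.

(* Main.v *)
Require Import Defs.
From HB Require Import structures.
From mathcomp Require Import all_boot all_order all_algebra all_fingroup all_solvable all_field all_character.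
Import Order.TTheory GRing.Theory Num.Theory.
From mathcomp Require Import zify ring.

Lemma comb (r N : nat) (d : 'I_r -> nat) : 0 < N -> (forall i, d i < N) ->
  \sum_i d i = N -> 3 * N <= \sum_i (N - d i) %% N ->
  exists n, \sum_i (n * d i %% N) = 2 * N /\ 2 * N <= \sum_i (N - n * d i %% N) %% N.
Proof.
move=> N0 dN sd s3.
pose V n := \sum_i (n * d i %% N).
have VN1 : V N.-1 = \sum_i (N - d i) %% N.
  apply: eq_bigr => i _; have := dN i.
  case: (posnP (d i)) => [-> _|dp dl]; first by rewrite muln0 mod0n subn0 modnn.
  have -> : N.-1 * d i = (d i).-1 * N + (N - d i) by nia.
  by rewrite modnMDl.
have exP : exists n, 2 * N <= V n by exists N.-1; rewrite VN1; lia.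
case: (ex_minnP exP) => n0 Hn0 Hmin.
have V0 : V 0 = 0 by apply: big1 => i _; rewrite mul0n mod0n.
have V1 : V 1 = N by rewrite -sd; apply: eq_bigr => i _; rewrite mul1n modn_small.
case: n0 Hn0 Hmin => [|m]; first by rewrite V0; lia.
move=> HV Hmin.
have Vm : V m < 2 * N.
  rewrite ltnNge; apply/negP => H; have := Hmin _ H; lia.
have m0 : 0 < m by case: (m) Vm HV => // _; rewrite V1; lia.
have Vmod : V m %% N = 0.
  rewrite /V modn_summ -big_distrr /= sd modnMl //.
have [q Eq] : exists q, V m = q * N by exists (V m %/ N); rewrite (divn_eq (V m) N) Vmod addn0 mulnK.
have VmN : V m <= N.
  rewrite Eq; have : q * N < 2 * N by rewrite -Eq.
  rewrite ltn_pmul2r // => q2; rewrite -{2}[N]mul1n leq_pmul2r //; lia.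
pose u i := m.+1 * d i %% N.
pose A i := m * d i %% N + d i.
have uA i : u i <= A i.
  by rewrite /u /A mulSnr -modnDml leq_mod.
have sA : \sum_i A i = V m + N by rewrite big_split /= sd.
have Vu : V m.+1 = \sum_i u i by [].
have sleA : V m.+1 <= \sum_i A i by apply: leq_sum => i _; apply: uA.
have E2 : V m.+1 = 2 * N by lia.
have EA : \sum_i u i = \sum_i A i by lia.
have uAe i : u i = A i.
  have : \sum_i (A i - u i) = 0 by rewrite sumnB ?EA ?subnn // => j _; apply: uA.
  move/eqP; rewrite sum_nat_eq0 => /forallP/(_ i) /=; have := uA i; lia.
exists m.+1; split; first by [].
have term i : (N - u i) %% N + u i = (N - d i) %% N + d i.
  case: (posnP (d i)) => [d0|dp].
    by rewrite /u d0 muln0 mod0n subn0 modnn.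
  have ul : u i < N by rewrite ltn_pmod.
  have ug : d i <= u i by rewrite uAe /A leq_addl.
  rewrite !modn_small; try lia; have := dN i; lia.
have : \sum_i ((N - u i) %% N + u i) = \sum_i ((N - d i) %% N + d i) by apply: eq_bigr => i _; apply: term.
rewrite !big_split /= sd -Vu E2 => H.
have H2 : \sum_i (N - u i) %% N + 2 * N = \sum_i (N - d i) %% N + N := H.
change (2 * N <= \sum_i (N - u i) %% N); lia.
Qed.

Local Open Scope ring_scope.

Lemma geom_sum0 (x : algC) (l : nat) : x != 1 -> x ^+ l = 1 -> \sum_(i < l) x ^+ i = 0.
Proof.
move=> x1 xl; have := subrX1 x l; rewrite xl subrr => /esym/eqP.
by rewrite mulf_eq0 subr_eq0 (negbTE x1) /= => /eqP.
Qed.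

Lemma root_closer {w : algC} {l : nat} : (1 < l)%N -> w != 1 -> w != 0 ->
  exists z, z ^+ l = w /\ `|1 - z| < `|1 - w|.
Proof.
move=> l1 w1 w0; have l0 : (0 < l)%N by apply: ltnW.
have [eps peps] := C_prim_root_exists l0.
pose z0 := l.-root w.
have z0l : z0 ^+ l = w by rewrite /z0 rootCK.
pose zi (i : 'I_l) := z0 * eps ^+ i.
have zil i : zi i ^+ l = w.
  by rewrite /zi exprMn -exprM mulnC exprM (prim_expr_order peps) expr1n mulr1.
pose s (z : algC) := \sum_(k < l) z ^+ k.
have sum_s : \sum_(i < l) s (zi i) = l%:R.
  rewrite /s exchange_big /= (bigD1 (Ordinal l0)) //=.
  rewrite [X in _ + X]big1 ?addr0.
    by rewrite (eq_bigr (fun _ => 1)) ?sumr_const ?card_ord // => i _; rewrite expr0.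
  move=> k k0.
  rewrite (eq_bigr (fun i : 'I_l => z0 ^+ k * (eps ^+ k) ^+ i)); last first.
    by move=> i _; rewrite /zi exprMn -!exprM mulnC.
  rewrite -mulr_sumr geom_sum0 ?mulr0 //.
    rewrite -(prim_order_dvd peps); apply/negP => /dvdn_leq.
    have := ltn_ord k; have : k != 0%N :> nat by [].
    by case: (nat_of_ord k) => // k' _ kl /(_ isT); rewrite leqNgt kl.
  by rewrite -exprM mulnC exprM (prim_expr_order peps) expr1n.
have fact1 z : z ^+ l = w -> 1 - w = (1 - z) * s z.
  move=> <-; rewrite -opprB subrX1 -mulNr opprB //.
have [/existsP[i Hi]|/existsPn H] := boolP [exists i, `|1 - zi i| < `|1 - w|].
  by exists (zi i).
exfalso.
have sle i : `|s (zi i)| <= 1.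
  have Hle : `|1 - w| <= `|1 - zi i| by rewrite real_leNgt ?normr_real //; apply: H.
  have := fact1 _ (zil i) => /(congr1 Num.norm); rewrite normrM => E.
  have w1n : 0 < `|1 - w| by rewrite normr_gt0 subr_eq0 eq_sym.
  rewrite -(ler_pM2l w1n) mulr1.
  apply: (le_trans (y := `|1 - zi i| * `|s (zi i)|)); last by rewrite E.
  by rewrite mulrC [X in _ <= X]mulrC ler_wpM2l.
have s1 : forall i, s (zi i) = 1.
  move=> i; apply: (@normC_sum_upper _ _ xpredT (fun i => s (zi i)) (fun _ => 1)) => //.
  by rewrite sum_s sumr_const card_ord.
have zw i : zi i = w.
  by have := fact1 _ (zil i); rewrite s1 mulr1 => /addrI/oppr_inj.
have e1 := zw (Ordinal l1); have e0 := zw (Ordinal l0).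
rewrite /zi /= expr0 mulr1 in e0 e1; rewrite -e0 -{2}[z0]mulr1 in e1.
have z00 : z0 != 0 by apply: contraNneq w0 => e; rewrite -z0l e expr0n; case: (l) l0.
move: e1 => /(mulfI z00); rewrite expr1 => /eqP.
by rewrite -(expr1 eps) -(prim_order_dvd peps) dvdn1 gtn_eqF.
Qed.


Lemma norm1_sub (z : algC) : `|z| = 1 -> `|1 - z| ^+ 2 = 2 - 2 * 'Re z.
Proof.
move=> nz; rewrite normCK rmorphB rmorph1 ReE [2 * _]mulrC divfK ?pnatr_eq0 //.
have hzc : z * z^* = 1 by rewrite -normCK nz expr1n.
have -> : (1 - z) * (1 - z^*) = 1 - z - z^* + z * z^* by ring.
by rewrite hzc; ring.
Qed.

Lemma norm_root1 {z : algC} {N : nat} : (0 < N)%N -> z ^+ N = -1 -> `|z| = 1.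
Proof.
move=> N0 zN; apply/eqP; rewrite -(pexpr_eq1 N0) ?normr_ge0 //.
by rewrite -normrX zN normrN normr1.
Qed.

Lemma N1_neq1 : (-1 : algC) != 1.
Proof. by rewrite lt_eqF // (lt_trans (ltrN10 _) ltr01). Qed.

Lemma zeta_prim {N} : (0 < N)%N -> N.-primitive_root (zeta N).
Proof.
move=> N0; pose w := N.-root (-1 : algC).
have wN : w ^+ N = -1 by rewrite /w rootCK.
have w2N : w ^+ (N.*2) = 1 by rewrite -muln2 exprM wN sqrrN expr1n.
have N20 : (0 < N.*2)%N by rewrite double_gt0.
have [d pd dd] := prim_order_exists N20 w2N.
have d0 := prim_order_gt0 pd.
have ndN : ~~ (d %| N)%N by rewrite (prim_order_dvd pd) wN N1_neq1.
pose q := (N.*2 %/ d)%N.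
have Eq : N.*2 = (q * d)%N by rewrite divnK.
have [q1|q1] := eqVneq q 1%N.
  have d2N : d = N.*2 by rewrite Eq q1 mul1n.
  by have := exp_prim_root pd 2; rewrite d2N -muln2 gcdnMl mulnK.
have oq : odd q.
  apply: contraR ndN => /even_halfK qe; apply/dvdnP; exists q./2.
  by apply: double_inj; rewrite Eq -{1}qe -!muln2 mulnAC.
have q3 : (1 < q)%N.
  by move: q1 oq; case: (q) => [|[|]].
have ed : ~~ odd d.
  have : ~~ odd (N.*2) by rewrite odd_double.
  by rewrite Eq oddM oq.
pose h := d./2.
have dh : d = h.*2 by rewrite /h even_halfK.
have Nh : N = (q * h)%N.
  by apply: double_inj; rewrite Eq dh -!muln2 mulnA.
have wh : w ^+ h = -1.
  have : (w ^+ h) ^+ 2 == 1 by rewrite -exprM muln2 -dh prim_expr_order.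
  rewrite sqrf_eq1 => /orP[|/eqP //].
  have h0 : (0 < h)%N by move: d0; rewrite dh double_gt0.
  rewrite -(prim_order_dvd pd) dh => /(dvdn_leq h0); rewrite -addnn => hh.
  by exfalso; lia.
have w1 : w != 1 by apply: contra_eq_neq wN => ->; rewrite expr1n eq_sym N1_neq1.
have w0 : w != 0 by rewrite -normr_eq0 (norm_root1 N0 wN) oner_eq0.
have [z [zq zc]] := root_closer q3 w1 w0.
have zN : z ^+ N = -1 by rewrite Nh exprM zq.
pose z' := if 0 <= 'Im z then z else z^*.
have z'N : z' ^+ N = -1.
  by rewrite /z'; case: ifP => // _; rewrite -rmorphXn zN rmorphN1.
have Iz' : 0 <= 'Im z'.
  rewrite /z'; case: ifP => // /negbT nI; rewrite Im_conj oppr_ge0.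
  by move: nI; rewrite -real_ltNge ?Creal_Im ?rpred0 // => /ltW.
have Rz' : 'Re z' = 'Re z by rewrite /z'; case: ifP; rewrite ?Re_conj.
have := rootC_Re_max N0 z'N Iz'; rewrite Rz' -/w => Rle.
have : `|1 - z| ^+ 2 < `|1 - w| ^+ 2 by rewrite ltr_pXn2r // ?nnegrE.
rewrite !norm1_sub ?(norm_root1 N0 zN) ?(norm_root1 N0 wN) //.
rewrite ltrD2l ltrN2 ltr_pM2l // => Hlt.
by have := le_lt_trans Rle Hlt; rewrite ltxx.
Qed.

Lemma angle_zeta N k : (0 < N)%N -> angle N (zeta N ^+ k) = (k %% N)%N%:R / N%:R.
Proof.
move=> N0; rewrite /angle; congr (_%:R / _).
have pz := zeta_prim N0.
rewrite (@eq_in_find _ _ (pred1 (k %% N)%N)); last first.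
  move=> j; rewrite mem_iota add0n /= => jN.
  by rewrite (eq_prim_root_expr pz) (modn_small jN) eq_sym.
have kN : (k %% N < N)%N by rewrite ltn_pmod.
have := @index_uniq _ 0 (k %% N)%N (iota 0 N); rewrite size_iota nth_iota // add0n.
by move=> /(_ kN (iota_uniq 0 N)).
Qed.

Lemma rat_ge (S N m : nat) : (0 < N)%N ->
  (m%:R <= -1 + S%:R / N%:R :> rat) = (m.+1 * N <= S)%N.
Proof.
move=> N0; rewrite addrC lerBrDr ler_pdivlMr ?ltr0n // natr1 -natrM ler_nat.
by [].
Qed.

Lemma rat_le (S N m : nat) : (0 < N)%N ->
  (-1 + S%:R / N%:R <= m%:R :> rat) = (S <= m.+1 * N)%N.
Proof.
move=> N0; rewrite addrC lerBlDr ler_pdivrMr ?ltr0n // natr1 -natrM ler_nat.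
by [].
Qed.

Lemma rat_eq (S N m : nat) : (0 < N)%N ->
  (-1 + S%:R / N%:R = m%:R :> rat) <-> (S = m.+1 * N)%N.
Proof.
move=> N0; split => [E|E].
  apply/eqP; rewrite eqn_leq -rat_le // -rat_ge // E lexx //.
by apply/eqP; rewrite eq_le rat_le // rat_ge // E leqnn.
Qed.

Lemma lin_val (gT : finGroupType) (G : {group gT}) (xi : 'CF(G)) x :
  xi \is a linear_char -> x \in G ->
  {k : nat | xi x = zeta #|G| ^+ k & (k < #|G|)%N}.
Proof.
move=> lxi Gx.
have : xi x ^+ #|G| = 1 by rewrite -(lin_charX lxi) // expg_cardG // lin_char1.
move/(prim_rootP (zeta_prim (cardG_gt0 G))) => [i ->].
by exists i.
Qed.

Lemma conj_zeta N k : (0 < N)%N -> (k < N)%N ->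
  (zeta N ^+ k)^* = zeta N ^+ ((N - k) %% N)%N.
Proof.
move=> N0 kN; have pz := zeta_prim N0.
set v := zeta N ^+ k.
have vN : v ^+ N = 1 by rewrite /v exprAC (prim_expr_order pz) expr1n.
have nv : `|v| = 1.
  apply/eqP; rewrite -(pexpr_eq1 N0) ?normr_ge0 // -normrX vN normr1 //.
have v0 : v != 0 by rewrite -normr_eq0 nv oner_eq0.
apply: (mulfI v0).
have -> : v * v^* = 1 by rewrite -normCK nv expr1n.
rewrite /v -exprD -(prim_expr_mod pz) modnDmr.
by rewrite addnC (subnK (ltnW kN)) modnn expr0.
Qed.

Lemma sigf_val (gT : finGroupType) (G : {group gT}) (r : nat) (a : 'I_r -> gT)
  (sigma : 'CF(G)) (k : 'I_r -> nat) : sigma != 1 ->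
  (forall i, (sigma^*)%CF (a i) = zeta #|G| ^+ k i) ->
  sigf a sigma = -1 + (\sum_i (k i %% #|G|)%N)%:R / #|G|%:R.
Proof.
move=> s1 Hk; rewrite /sigf (negbTE s1); congr (_ + _).
rewrite natr_sum mulr_suml; apply: eq_bigr => i _.
by rewrite Hk angle_zeta ?cardG_gt0.
Qed.

Theorem proposition3p14 (gT : finGroupType) (G : {group gT}) (r : nat)
  (a : 'I_r -> gT) :
  abelian G ->
  (3 <= r)%N ->
  (forall i, a i \in G) ->
  (forall i, a i != 1%g) ->
  <<[set a i | i in 'I_r]>>%g = G ->
  (\prod_(i < r) a i)%g = 1%g ->
  (exists tau : 'CF(G), tau \is a linear_char /\
     sigf a (tau^*)%CF = 0 /\ 2 <= gsig a tau) ->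
  exists tau' : 'CF(G), tau' \is a linear_char /\
     sigf a (tau'^*)%CF = 1 /\ 2 <= gsig a tau'.
Proof.
move=> abG r3 aG a1 gen prod1 [tau [ltau [s0 g2]]].
have N0 : (0 < #|G|)%N := cardG_gt0 G.
set N := #|G| in N0 *.
have pz := zeta_prim N0.
have t1 : tau != 1.
  apply: contraTneq g2 => ->; rewrite /gsig cfConjC_cfun1 /sigf eqxx addr0.
  by [].
have tc1 : (tau^*)%CF != 1 by rewrite cfAut_eq1.
pose d i := sval (@lin_val _ _ _ _ ltau (aG i)).
have Hd i : tau (a i) = zeta N ^+ d i by rewrite /d; case: (lin_val _ _).
have dN i : (d i < N)%N by rewrite /d; case: (lin_val _ _).
have s0' := s0.
rewrite (@sigf_val _ _ _ _ _ d) ?tc1 // in s0'; last by move=> i; rewrite cfConjCK Hd.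
have sd : (\sum_i d i)%N = N.
  have := (rat_eq _ _ 0 N0).1 s0'; rewrite mul1n => <-.
  by apply: eq_bigr => i _; rewrite modn_small.
have tcv i : (tau^*)%CF (a i) = zeta N ^+ ((N - d i) %% N)%N.
  by rewrite cfConjCE Hd (conj_zeta _ _ N0 (dN i)).
rewrite /gsig s0 addr0 (@sigf_val _ _ _ _ _ (fun i => ((N - d i) %% N)%N)) // in g2.
rewrite -[2]/(2%:R) rat_ge // in g2.
have [n [Hn1 Hn2]] : exists n, (\sum_i (n * d i %% N) = 2 * N)%N /\
    (2 * N <= \sum_i (N - n * d i %% N) %% N)%N.
  apply: (@comb _ _ _ N0 dN sd); move: g2.
  rewrite (eq_bigr (fun i => (N - d i) %% N)%N); first by [].
  by move=> i _; rewrite modn_mod.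
pose tau' := tau ^+ n.
have ltau' : tau' \is a linear_char by rewrite rpredX.
have Hv i : tau' (a i) = zeta N ^+ (n * d i %% N)%N.
  by rewrite exp_cfunE // Hd -exprM mulnC prim_expr_mod.
have t'1 : tau' != 1.
  apply/negP => /eqP e; move: Hn1.
  rewrite big1 => [|i _]; first by case: (N) N0.
  apply/eqP; have := Hv i; rewrite e cfun1E aG /= -(expr0 (zeta N)).
  move/eqP; rewrite eq_sym (eq_prim_root_expr pz) mod0n modn_mod //.
have tc'1 : (tau'^*)%CF != 1 by rewrite cfAut_eq1.
exists tau'; split => //.
have sf1 : sigf a (tau'^*)%CF = 1.
  rewrite (@sigf_val _ _ _ _ _ (fun i => (n * d i %% N)%N)) //; last first.
    by move=> i; rewrite cfConjCK Hv.
  apply: (rat_eq _ _ 1 N0).2; rewrite -[(1.+1 * N)%N]Hn1.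
  by apply: eq_bigr => i _; rewrite modn_mod.
split => //.
rewrite /gsig sf1 (@sigf_val _ _ _ _ _ (fun i => ((N - n * d i %% N) %% N)%N)) //; last first.
  by move=> i; rewrite cfConjCE Hv (conj_zeta _ _ N0) // ltn_pmod.
have : (1%:R <= -1 + (\sum_i ((N - n * d i %% N) %% N %% N)%N)%:R / N%:R :> rat).
  rewrite rat_ge //; rewrite (eq_bigr (fun i => (N - n * d i %% N) %% N)%N) //.
  by move=> i _; rewrite modn_mod.
rewrite -[2]/(1 + 1) => H; rewrite lerD2r //.
Qed.
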